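(* Let $T>0$, $\theta\ge0$, and let $g:[-T,T)^d\times[-T,T)^d\to\mathbb C$ be symmetric and $\theta$-biadditive in $[-T,T)^d\times[-T,T)^d$. Then there is a symmetric, biadditive function $G$ in $[-T,T)^d\times[-T,T)^d$ such that $$|g({\bf x},{\bf y})-G({\bf x},{\bf y})|\le(7d^2-1)\theta\quad\text{for all }{\bf x},{\bf y}\in[-T,T)^d.$$ Moreover, if the projections of $g({\bf x},{\bf y})$ onto each coordinate (i.e. the functions $(x,y)\mapsto g(x{\bf e}_i,y{\bf e}_k)$) are continuous in at least one point (with respect to both arguments), then $G$ is continuous and bilinear in $[-T,T)^d\times[-T,T)^d$.
   Context: ${\bf e}_i$ is the $i$-th standard basis vector. For $\mathcal E\subseteq\mathbb R^d$, $g$ is $\theta$-biadditive in $\mathcal E\times\mathcal E$ if $|g({\bf x}_1+{\bf x}_2,{\bf y})-g({\bf x}_1,{\bf y})-g({\bf x}_2,{\bf y})|\le\theta$ and $|g({\bf x},{\bf y}_1+{\bf y}_2)-g({\bf x},{\bf y}_1)-g({\bf x},{\bf y}_2)|\le\theta$ for all ${\bf x}_1,{\bf x}_2,{\bf y},{\bf x},{\bf y}_1,{\bf y}_2\in\mathcal E$ with ${\bf x}_1+{\bf x}_2\in\mathcal E$ and ${\bf y}_1+{\bf y}_2\in\mathcal E$; biadditive means $0$-biadditive; symmetric means $g({\bf x},{\bf y})=g({\bf y},{\bf x})$ for all ${\bf x},{\bf y}\in\mathcal E$. *)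

(* Defs.v *)
From HB Require Import structures.
From mathcomp Require Import all_boot all_order all_algebra.
From mathcomp Require Import all_classical all_reals all_analysis.
From mathcomp Require Import complex.
Set Implicit Arguments. Unset Strict Implicit. Unset Printing Implicit Defensive.
Import Order.TTheory GRing.Theory Num.Theory.
Import numFieldTopology.Exports numFieldNormedType.Exports.
Local Open Scope classical_set_scope.
Local Open Scope ring_scope.

Definition box (R : realType) (d : nat) (T : R) : set 'rV[R]_d :=
  [set x | forall i : 'I_d, -T <= x ord0 i < T].

Arguments box {R} d T.

Definition ebasis (R : realType) (d : nat) (i : 'I_d) : 'rV[R]_d :=
  delta_mx ord0 i.

Arguments ebasis {R d} i.

Definition biadditive_approx (R : realType) (d : nat) (E : set 'rV[R]_d)
  (theta : R) (g : 'rV[R]_d -> 'rV[R]_d -> R[i]) : Prop :=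
  (forall x1 x2 y, E x1 -> E x2 -> E y -> E (x1 + x2) ->
     `|g (x1 + x2) y - g x1 y - g x2 y| <= (theta%:C)%C) /\
  (forall x y1 y2, E x -> E y1 -> E y2 -> E (y1 + y2) ->
     `|g x (y1 + y2) - g x y1 - g x y2| <= (theta%:C)%C).

Definition biadditive_on (R : realType) (d : nat) (E : set 'rV[R]_d)
  (g : 'rV[R]_d -> 'rV[R]_d -> R[i]) : Prop :=
  biadditive_approx E 0 g.

Definition symmetric_on (R : realType) (d : nat) (E : set 'rV[R]_d)
  (g : 'rV[R]_d -> 'rV[R]_d -> R[i]) : Prop :=
  forall x y, E x -> E y -> g x y = g y x.

Definition bilinear_on (R : realType) (d : nat) (E : set 'rV[R]_d)
  (g : 'rV[R]_d -> 'rV[R]_d -> R[i]) : Prop :=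
  biadditive_on E g /\
  (forall (c : R) x y, E x -> E (c *: x) -> E y -> g (c *: x) y = (c%:C)%C * g x y) /\
  (forall (c : R) x y, E x -> E y -> E (c *: y) -> g x (c *: y) = (c%:C)%C * g x y).

(* The complex numbers R[i] carry the topology of their (numeric) norm,
   exactly as MathComp-Analysis does generically for numFieldType's. *)
HB.instance Definition _ (R : rcfType) := PseudoPointedMetric.copy R[i] (R[i])^o.

(* Main.v *)
Require Import Defs.
From HB Require Import structures.
From mathcomp Require Import all_boot all_order all_algebra.
From mathcomp Require Import all_classical all_reals all_analysis.
From mathcomp Require Import complex.
From mathcomp Require Import ring lra.
Import Order.TTheory GRing.Theory Num.Theory.
Import numFieldTopology.Exports numFieldNormedType.Exports.
Local Open Scope classical_set_scope.
Local Open Scope ring_scope.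
Set Implicit Arguments. Unset Strict Implicit. Unset Printing Implicit Defensive.


Section Basics.
Variable R : realType.
Local Notation C := R[i].
Local Notation cR x := ((x)%:C)%C.

Definition nc (z : C) : R := Normc.normc z.

Lemma ncD (x y : C) : nc (x + y) <= nc x + nc y.
Proof. exact: le_normcD. Qed.
Lemma ncN (x : C) : nc (- x) = nc x.
Proof. exact: normcN. Qed.
Lemma ncM (x y : C) : nc (x * y) = nc x * nc y.
Proof. exact: Normc.normcM. Qed.
Lemma nc_ge0 (x : C) : 0 <= nc x.
Proof. by rewrite -ler0c; exact: (normr_ge0 x). Qed.
Lemma ncR (x : R) : nc (cR x) = `|x|.
Proof. by rewrite /nc /Normc.normc /= expr0n /= addr0 sqrtr_sqr. Qed.
Lemma nc0 : nc 0 = 0.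
Proof. exact: Normc.normc0. Qed.
Lemma nc_eq0 (x : C) : nc x = 0 -> x = 0.
Proof. exact: Normc.eq0_normc. Qed.
Lemma leC (z : C) (c : R) : (`|z| <= cR c) = (nc z <= c).
Proof. exact: lecR. Qed.
Lemma ncB (x y : C) : nc (x - y) = nc (y - x).
Proof. by rewrite -ncN opprB. Qed.
Lemma ncRe (z : C) : `|complex.Re z| <= nc z.
Proof.
case: z => a b; rewrite /nc /Normc.normc /= -sqrtr_sqr.
by apply: ler_wsqrtr; rewrite lerDl sqr_ge0.
Qed.
Lemma ncIm (z : C) : `|complex.Im z| <= nc z.
Proof.
case: z => a b; rewrite /nc /Normc.normc /= -sqrtr_sqr.
by apply: ler_wsqrtr; rewrite lerDr sqr_ge0.
Qed.
Lemma nci : nc 'i%C = 1.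
Proof. by rewrite /nc /Normc.normc /= expr0n /= add0r expr1n sqrtr1. Qed.
Lemma ncReIm (z : C) : nc z <= `|complex.Re z| + `|complex.Im z|.
Proof.
rewrite [X in nc X]complexE; apply: le_trans (ncD _ _) _.
by rewrite ncM nci mul1r !ncR.
Qed.
Lemma ReB (x y : C) : complex.Re (x - y) = complex.Re x - complex.Re y.
Proof. by case: x y => a b [c d]. Qed.
Lemma ImB (x y : C) : complex.Im (x - y) = complex.Im x - complex.Im y.
Proof. by case: x y => a b [c d]. Qed.

Lemma nc_sum (I : finType) (F : I -> C) : nc (\sum_i F i) <= \sum_i nc (F i).
Proof.
elim/big_rec2: _ => [|i y z _ h]; first by rewrite nc0.
by apply: le_trans (ncD _ _) _; rewrite lerD2l.
Qed.

Lemma pow2_gt0 n : 0 < (2 ^+ n : R).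
Proof. by rewrite exprn_gt0. Qed.

Lemma small (x a c : R) : (forall n, x <= a + c / 2 ^+ n) -> x <= a.
Proof.
move=> h; rewrite leNgt; apply/negP => xa.
have c0 : 0 <= c by have := h 0%N; rewrite expr0 divr1; lra.
have e0 : 0 < x - a by lra.
pose k := Num.Def.archi_bound (c / (x - a)).
have hk : c / (x - a) < k%:R by apply: archi_boundP; rewrite divr_ge0 // ltW.
have hk2 : (k%:R : R) <= 2 ^+ k.
  by rewrite -natrX ler_nat; apply: ltnW; rewrite ltn_expl.
have p0 := pow2_gt0 k.
have hc : c < 2 ^+ k * (x - a).
  by rewrite -ltr_pdivrMr //; apply: lt_le_trans hk hk2.
have h2 : x - a <= c / 2 ^+ k by have := h k; lra.
move: h2; rewrite ler_pdivlMr // => h2.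
nra.
Qed.

Lemma limR_ex (r : nat -> R) (K : R) :
  (forall n, `|r n.+1 - r n| <= K / 2 ^+ n) ->
  exists L, forall n, `|r n - L| <= 2 * K / 2 ^+ n.
Proof.
move=> h.
pose a n := r n - 2 * K / 2 ^+ n.
pose b n := r n + 2 * K / 2 ^+ n.
have e n : 2 * K / 2 ^+ n.+1 = K / 2 ^+ n.
  rewrite exprS; field; rewrite gt_eqF ?pow2_gt0 //.
have ha : forall n, a n <= a n.+1.
  move=> n; rewrite /a e; have := h n; rewrite ler_norml; lra.
have hb : forall n, b n.+1 <= b n.
  move=> n; rewrite /b e; have := h n; rewrite ler_norml; lra.
have hab n : a n <= b n.
  rewrite /a /b; have : 0 <= K by have := h n; move/(le_trans (normr_ge0 _)); rewrite pmulr_lge0 // invr_gt0 pow2_gt0.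
  move=> K0; have : 0 <= 2 * K / 2 ^+ n by rewrite divr_ge0 ?mulr_ge0 // ltW // pow2_gt0.
  lra.
have ma : {homo a : n m / (n <= m)%N >-> n <= m} by apply/nondecreasing_seqP.
have mb : {homo b : n m / (n <= m)%N >-> m <= n}.
  move=> n m nm; elim: m nm => [|m IH]; first by rewrite leqn0 => /eqP ->.
  rewrite leq_eqVlt => /orP[/eqP -> //|]; rewrite ltnS => /IH; apply: le_trans.
  exact: hb.
have amb m n : a m <= b n.
  case: (leqP m n) => mn; first by apply: le_trans (ma _ _ mn) (hab n).
  by apply: le_trans (hab m) (mb _ _ (ltnW mn)).
set E := range a.
have E0 : E !=set0 by exists (a 0%N); exists 0%N.
have ubE n : ubound E (b n) by move=> _ [m _ <-]; exact: amb.
have hs : has_sup E by split => //; exists (b 0%N); exact: ubE.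
exists (sup E) => n; rewrite ler_norml.
have h1 : a n <= sup E by apply: sup_upper_bound => //; exists n.
have h2 : sup E <= b n by apply: ge_sup => //; exact: ubE.
move: h1 h2; rewrite /a /b; lra.
Qed.


Definition tail (u : nat -> C) (L : C) :=
  exists c : R, forall n, nc (u n - L) <= c / 2 ^+ n.
Definition Lim (u : nat -> C) : C := xget 0 (tail u).

Lemma divD2 (a b : R) n : a / 2 ^+ n + b / 2 ^+ n = (a + b) / 2 ^+ n.
Proof. by rewrite mulrDl. Qed.

Lemma tail_uniq u L1 L2 : tail u L1 -> tail u L2 -> L1 = L2.
Proof.
move=> [c1 h1] [c2 h2]; apply/eqP; rewrite -subr_eq0; apply/eqP/nc_eq0.
apply/le_anti/andP; split; last exact: nc_ge0.
apply: (@small _ _ (c1 + c2)) => n; rewrite add0r -divD2.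
have -> : L1 - L2 = (u n - L2) - (u n - L1) by ring.
apply: le_trans (ncD _ _) _; rewrite ncN addrC; exact: lerD.
Qed.

Lemma LimE u L : tail u L -> Lim u = L.
Proof.
move=> h; have h' : tail u (Lim u) by apply: xgetPex; exists L.
exact: tail_uniq h' h.
Qed.

Lemma geo_tail u K : (forall n, nc (u n.+1 - u n) <= K / 2 ^+ n) -> tail u (Lim u).
Proof.
move=> h; apply: xgetPex.
have hr0 : forall n, `|complex.Re (u n.+1) - complex.Re (u n)| <= K / 2 ^+ n.
  by move=> n; rewrite -ReB; apply: le_trans (ncRe _) (h n).
have hi0 : forall n, `|complex.Im (u n.+1) - complex.Im (u n)| <= K / 2 ^+ n.
  by move=> n; rewrite -ImB; apply: le_trans (ncIm _) (h n).
have [Lr hr] := @limR_ex _ _ hr0.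
have [Li hi] := @limR_ex _ _ hi0.
exists (Complex Lr Li)%C, (2 * K + 2 * K) => n.
apply: le_trans (ncReIm _) _; rewrite ReB ImB /= -divD2.
exact: lerD.
Qed.

Lemma tailD u v L M : tail u L -> tail v M ->
  tail (fun n => u n + v n) (L + M).
Proof.
move=> [c1 h1] [c2 h2]; exists (c1 + c2) => n; rewrite -divD2.
have -> : u n + v n - (L + M) = (u n - L) + (v n - M) by ring.
apply: le_trans (ncD _ _) _; exact: lerD.
Qed.

Lemma tailB u v L M : tail u L -> tail v M ->
  tail (fun n => u n - v n) (L - M).
Proof.
move=> [c1 h1] [c2 h2]; exists (c1 + c2) => n; rewrite -divD2.
have -> : u n - v n - (L - M) = (u n - L) - (v n - M) by ring.
apply: le_trans (ncD _ _) _; rewrite ncN; exact: lerD.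
Qed.

Lemma tail_bound u L a c : tail u L -> (forall n, nc (u n) <= a + c / 2 ^+ n) ->
  nc L <= a.
Proof.
move=> [c1 h1] h; apply: (@small _ _ (c + c1)) => n.
have -> : L = u n - (u n - L) by ring.
apply: le_trans (ncD _ _) _; rewrite ncN -divD2 addrA; exact: lerD.
Qed.

End Basics.

Section Hyers.
Variable R : realType.
Local Notation C := R[i].
Local Notation cR x := ((x)%:C)%C.
Variable T : R.
Hypothesis hT : 0 < T.
Local Ltac lrat := let h := fresh in have h := hT; lra.

Definition I (x : R) := (-T <= x) && (x < T).
Definition fl (x : R) : R := (Num.floor (x / T))%:~R.

Lemma fl_itv x : fl x * T <= x < fl x * T + T.
Proof.
have := floor_itv (x / T); rewrite /fl intrD /= => /andP[h1 h2].
apply/andP; split; first by rewrite -ler_pdivlMr.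
by move: h2; rewrite mulr1z ltr_pdivrMr // mulrDl mul1r.
Qed.

Lemma fl_def (m : int) x : m%:~R * T <= x < m%:~R * T + T -> fl x = m%:~R.
Proof.
move=> /andP[h1 h2]; rewrite /fl (@floor_def _ _ m) //.
apply/andP; split; first by rewrite ler_pdivlMr.
by rewrite intrD mulr1z ltr_pdivrMr // mulrDl mul1r.
Qed.

Lemma fl_add a b :
  let r := a - fl a * T in let u := b - fl b * T in
  (r + u < T -> fl (a + b) = fl a + fl b) /\
  (T <= r + u -> fl (a + b) = fl a + fl b + 1).
Proof.
move=> r u; have := fl_itv a; have := fl_itv b.
rewrite /r /u /fl => /andP[b1 b2] /andP[a1 a2]; split => h.
  rewrite -intrD; apply: fl_def; rewrite intrD; apply/andP; split; lrat.
rewrite -intrD -[1]/(1%:~R) -intrD; apply: fl_def; rewrite !intrD; apply/andP; split; lrat.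
Qed.

Definition ext (phi : R -> C) (s : R) : C :=
  phi (s - fl s * T) - cR (fl s) * phi (- T).

Definition aadd (th : R) (phi : R -> C) :=
  forall a b, I a -> I b -> I (a + b) -> nc (phi (a + b) - phi a - phi b) <= th.

Lemma I_rem s : I (s - fl s * T).
Proof. have := fl_itv s; rewrite /I => /andP[h1 h2]; apply/andP; split; lrat. Qed.
Lemma I_mT : I (- T).
Proof. rewrite /I; apply/andP; split; lrat. Qed.
Lemma I0 : I 0.
Proof. rewrite /I; apply/andP; split; lrat. Qed.

Lemma ext_aadd th phi : aadd th phi ->
  forall a b, nc (ext phi (a + b) - ext phi a - ext phi b) <= 2 * th.
Proof.
move=> H a b.
have th0 : 0 <= th.
  have := H 0 0 I0 I0; rewrite addr0 => /(_ I0) h; exact: le_trans (nc_ge0 _) h.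
have [h1 h2] := fl_add a b.
have hr : 0 <= a - fl a * T < T.
  by have := fl_itv a => /andP[? ?]; apply/andP; split; lrat.
have hu : 0 <= b - fl b * T < T.
  by have := fl_itv b => /andP[? ?]; apply/andP; split; lrat.
move: h1 h2 hr hu.
set r := a - fl a * T; set u := b - fl b * T.
move=> h1 h2 /andP[a1 a2] /andP[b1 b2].
have Ir : I r by rewrite /I; apply/andP; split; lrat.
have Iu : I u by rewrite /I; apply/andP; split; lrat.
case: (ltP (r + u) T) => ru.
  rewrite /ext (h1 ru).
  have -> : a + b - (fl a + fl b) * T = r + u by rewrite /r /u; ring.
  rewrite -/r -/u rmorphD /=.
  have -> : phi (r + u) - (cR (fl a) + cR (fl b)) * phi (- T) -
    (phi r - cR (fl a) * phi (- T)) - (phi u - cR (fl b) * phi (- T)) =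
    phi (r + u) - phi r - phi u by ring.
  have Iru : I (r + u) by rewrite /I; apply/andP; split; lrat.
  apply: le_trans (H _ _ Ir Iu Iru) _; lrat.
rewrite /ext (h2 ru).
have -> : a + b - (fl a + fl b + 1) * T = r + (u - T) by rewrite /r /u; ring.
rewrite -/r -/u !rmorphD /= rmorph1.
have -> : phi (r + (u - T)) - (cR (fl a) + cR (fl b) + 1) * phi (- T) -
    (phi r - cR (fl a) * phi (- T)) - (phi u - cR (fl b) * phi (- T)) =
    (phi (r + (u - T)) - phi r - phi (u - T)) + (phi (u + - T) - phi u - phi (- T))
    by ring.
have IuT : I (u - T) by rewrite /I; apply/andP; split; lrat.
have IruT : I (r + (u - T)) by rewrite /I; apply/andP; split; lrat.
apply: le_trans (ncD _ _) _; rewrite mulr2n mulrDl mul1r.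
apply: lerD; first exact: H.
exact: H _ _ Iu I_mT IuT.
Qed.


Lemma cR2 : cR (2:R) = 2 :> C.
Proof. by rewrite rmorphMn rmorph1. Qed.

Definition sq (phi : R -> C) (s : R) (n : nat) : C :=
  cR ((2 ^+ n)^-1) * ext phi (2 ^+ n * s).
Definition hy (phi : R -> C) (s : R) : C := Lim (sq phi s).

Lemma aadd_ge0 th phi : aadd th phi -> 0 <= th.
Proof.
move=> H; have := H 0 0 I0 I0; rewrite addr0 => /(_ I0) h.
exact: le_trans (nc_ge0 _) h.
Qed.

Lemma sq_step th phi s n : aadd th phi ->
  nc (sq phi s n.+1 - sq phi s n) <= th / 2 ^+ n.
Proof.
move=> H; rewrite /sq.
have p0 := pow2_gt0 R n.
have -> : 2 ^+ n.+1 * s = 2 ^+ n * s + 2 ^+ n * s by rewrite exprS; ring.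
have -> : cR ((2 ^+ n)^-1) = cR ((2 ^+ n.+1)^-1) * cR (2:R).
  by rewrite -rmorphM /=; congr (cR _); rewrite exprS; field; rewrite gt_eqF.
set x := 2 ^+ n * s.
have -> : cR ((2 ^+ n.+1)^-1) * ext phi (x + x) - cR ((2 ^+ n.+1)^-1) * cR (2:R) * ext phi x
  = cR ((2 ^+ n.+1)^-1) * (ext phi (x + x) - ext phi x - ext phi x).
  by rewrite cR2; ring.
rewrite ncM ncR ger0_norm; last by rewrite invr_ge0 ltW ?pow2_gt0.
have := ext_aadd H x x => h.
have z0 : 0 <= (2 ^+ n.+1 : R)^-1 by rewrite invr_ge0 ltW ?pow2_gt0.
apply: le_trans (ler_wpM2l z0 h) _.
suff -> : (2 ^+ n.+1)^-1 * (2 * th) = th / 2 ^+ n by [].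
rewrite exprS; field; rewrite gt_eqF //.
Qed.

Lemma hy_tail th phi s : aadd th phi -> tail (sq phi s) (hy phi s).
Proof. move=> H; apply: (@geo_tail _ _ th) => n; exact: sq_step. Qed.

Lemma sq0 phi s : sq phi s 0 = ext phi s.
Proof. by rewrite /sq expr0 invr1 rmorph1 mul1r mul1r. Qed.

Lemma tail_ext (u v : nat -> C) (L : C) : (forall n, u n = v n) -> tail u L -> tail v L.
Proof. by move=> e [c h]; exists c => n; rewrite -e. Qed.

Lemma tail_cst (c : C) : @tail R (fun=> c) c.
Proof. by exists 0 => n; rewrite subrr nc0 mul0r. Qed.

Lemma hy_ext th phi s : aadd th phi -> nc (hy phi s - ext phi s) <= 2 * th.
Proof.
move=> H; have th0 := aadd_ge0 H.
have hn : forall n, nc (sq phi s n - sq phi s 0) <= 2 * th - 2 * th / 2 ^+ n.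
  elim=> [|n IH]; first by rewrite subrr nc0 expr0 divr1 subrr.
  have -> : sq phi s n.+1 - sq phi s 0 = (sq phi s n.+1 - sq phi s n) + (sq phi s n - sq phi s 0) by ring.
  apply: le_trans (ncD _ _) _; have := sq_step s n H => h.
  have e : 2 * th / 2 ^+ n.+1 = th / 2 ^+ n.
    by rewrite exprS; field; rewrite gt_eqF ?pow2_gt0.
  rewrite e; have : 2 * th / 2 ^+ n = th / 2 ^+ n + th / 2 ^+ n by rewrite mulr2n ?mulrDl; ring.
  lra.
have := tailB (hy_tail s H) (tail_cst (ext phi s)) => tl.
apply: (tail_bound tl (c := 0)) => n; rewrite mul0r addr0 -sq0.
have p0 := pow2_gt0 R n; have : 0 <= 2 * th / 2 ^+ n by apply: divr_ge0; [lra | exact: ltW].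
have := hn n; lra.
Qed.

Lemma hy_add th phi a b : aadd th phi -> hy phi (a + b) = hy phi a + hy phi b.
Proof.
move=> H.
have t1 := tailB (tailB (hy_tail (a + b) H) (hy_tail a H)) (hy_tail b H).
have t2 : tail (fun n => sq phi (a + b) n - sq phi a n - sq phi b n) 0.
  exists (2 * th) => n; rewrite subr0 /sq.
  have -> : cR ((2 ^+ n)^-1) * ext phi (2 ^+ n * (a + b)) -
     cR ((2 ^+ n)^-1) * ext phi (2 ^+ n * a) - cR ((2 ^+ n)^-1) * ext phi (2 ^+ n * b)
     = cR ((2 ^+ n)^-1) * (ext phi (2 ^+ n * a + 2 ^+ n * b) -
        ext phi (2 ^+ n * a) - ext phi (2 ^+ n * b)) by rewrite [2 ^+ n * (a + b)]mulrDr; ring.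
  rewrite ncM ncR ger0_norm; last by rewrite invr_ge0 ltW ?pow2_gt0.
  rewrite mulrC; apply: ler_wpM2r; [by rewrite invr_ge0 ltW ?pow2_gt0|exact: ext_aadd].
have := tail_uniq t1 t2 => /eqP; rewrite subr_eq0 => /eqP e; rewrite -e; ring.
Qed.

Lemma hy_approx th phi s : aadd th phi -> I s -> nc (phi s - hy phi s) <= 3 * th.
Proof.
move=> H /andP[s1 s2]; have th0 := aadd_ge0 H.
have h := hy_ext s H.
case: (leP 0 s) => s0.
  have e : fl s = 0.
    by rewrite -[0]/(0%:~R); apply: fl_def; rewrite mul0r add0r; apply/andP; split.
  move: h; rewrite /ext e mul0r subr0 rmorph0 mul0r subr0 ncB => h.
  apply: le_trans h _; lrat.
have e : fl s = -1.
  rewrite -[-1]/((-1)%:~R); apply: fl_def; apply/andP; split; rewrite ?mulN1r; lrat.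
move: h; rewrite /ext e mulN1r opprK rmorphN rmorph1 mulN1r opprK => h.
have IsT : I (s + T) by rewrite /I; apply/andP; split; lrat.
have IT := I_mT.
have Is : I (s + T + - T) by rewrite addrK /I; apply/andP; split; lrat.
have := H _ _ IsT IT Is; rewrite addrK => h2.
have -> : phi s - hy phi s = (phi s - phi (s + T) - phi (- T)) -
   (hy phi s - (phi (s + T) + phi (- T))) by ring.
apply: le_trans (ncD _ _) _; rewrite ncN.
have -> : 3 * th = th + 2 * th by ring.
exact: lerD.
Qed.

Lemma ext_eq (phi psi : R -> C) s : (forall x, I x -> phi x = psi x) -> ext phi s = ext psi s.
Proof. by move=> e; rewrite /ext !e //; [exact: I_mT|exact: I_rem]. Qed.

Lemma hy_eq (phi psi : R -> C) s : (forall x, I x -> phi x = psi x) -> hy phi s = hy psi s.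
Proof.
move=> e; rewrite /hy /sq; congr Lim; apply: funext => n; by rewrite (ext_eq _ e).
Qed.

Lemma hy_B (phi psi : R -> C) s : tail (sq phi s) (hy phi s) -> tail (sq psi s) (hy psi s) ->
  hy (fun x => phi x - psi x) s = hy phi s - hy psi s.
Proof.
move=> t1 t2; apply: LimE; apply: tail_ext (tailB t1 t2) => n.
by rewrite /sq /ext; ring.
Qed.

Lemma hy_D (phi psi : R -> C) s : tail (sq phi s) (hy phi s) -> tail (sq psi s) (hy psi s) ->
  hy (fun x => phi x + psi x) s = hy phi s + hy psi s.
Proof.
move=> t1 t2; apply: LimE; apply: tail_ext (tailD t1 t2) => n.
by rewrite /sq /ext; ring.
Qed.

Lemma tail_hy (phi : R -> C) s L : tail (sq phi s) L -> tail (sq phi s) (hy phi s).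
Proof. by move=> t; rewrite /hy (LimE t). Qed.

Lemma hy_bound (phi : R -> C) eps s : tail (sq phi s) (hy phi s) -> 0 <= eps ->
  (forall x, I x -> nc (phi x) <= eps) -> nc (hy phi s) <= `|s| / T * eps.
Proof.
move=> t e0 hb; apply: (tail_bound t (c := 2 * eps)) => n.
have p0 := pow2_gt0 R n.
rewrite /sq ncM ncR ger0_norm; last by rewrite invr_ge0 ltW.
set x := 2 ^+ n * s.
have hm : `|fl x| <= `|x| / T + 1.
  have := fl_itv x => /andP[h1 h2].
  have h1' : fl x <= x / T by rewrite ler_pdivlMr.
  have h2' : x / T - 1 < fl x by rewrite ltrBlDr ltr_pdivrMr // mulrDl mul1r.
  have n1 : x / T <= `|x| / T by rewrite ler_pM2r ?invr_gt0 // ler_norm.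
  have n2 : - (x / T) <= `|x| / T by rewrite -mulNr ler_pM2r ?invr_gt0 // -normrN ler_norm.
  rewrite ler_norml; apply/andP; split; lrat.
have he : nc (ext phi x) <= eps + (`|x| / T + 1) * eps.
  rewrite /ext; apply: le_trans (ncD _ _) _; rewrite ncN ncM ncR.
  apply: lerD; first exact/hb/I_rem.
  apply: ler_pM => //; first exact: nc_ge0.
  exact/hb/I_mT.
have z0 : 0 <= (2 ^+ n : R)^-1 by rewrite invr_ge0 ltW.
apply: le_trans (ler_wpM2l z0 he) _.
rewrite /x normrM ger0_norm; last exact: ltW.
suff -> : (2 ^+ n)^-1 * (eps + (2 ^+ n * `|s| / T + 1) * eps) = `|s| / T * eps + 2 * eps / 2 ^+ n by [].
have hT' := hT; field; rewrite ?gt_eqF //=.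
Qed.

End Hyers.

Section TwoD.
Variable R : realType.
Local Notation C := R[i].
Local Notation cR x := ((x)%:C)%C.
Variable T : R.
Hypothesis hT : 0 < T.
Variable th : R.
Variable f : R -> R -> C.
Hypothesis H1 : forall t, I T t -> aadd T th (fun s => f s t).
Hypothesis H2 : forall s, I T s -> aadd T th (f s).

Definition A s t := hy T (fun s' => f s' t) s.
Definition B s t := hy T (fun t' => A s t') t.

Lemma A_tail s t : I T t -> tail (sq T (fun s' => f s' t) s) (A s t).
Proof. by move=> It; apply: (hy_tail hT); exact: H1. Qed.

Lemma A_add t s1 s2 : I T t -> A (s1 + s2) t = A s1 t + A s2 t.
Proof. by move=> It; apply: (hy_add hT); exact: H1. Qed.

Lemma A_approx s t : I T s -> I T t -> nc (f s t - A s t) <= 3 * th.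
Proof. by move=> Is It; apply: (hy_approx hT) => //; exact: H1. Qed.

Lemma th_ge0 : 0 <= th.
Proof. exact: (aadd_ge0 hT (H2 (I0 hT))). Qed.

Lemma A_aadd s : aadd T (`|s| / T * th) (A s).
Proof.
move=> t1 t2 I1 I2 I12.
pose psi s' := f s' (t1 + t2) - f s' t1 - f s' t2.
have tp : tail (sq T psi s) (A s (t1 + t2) - A s t1 - A s t2).
  apply: tail_ext (tailB (tailB (A_tail s I12) (A_tail s I1)) (A_tail s I2)) => n.
  by rewrite /sq /ext /psi; ring.
have e : hy T psi s = A s (t1 + t2) - A s t1 - A s t2 by exact: LimE tp.
rewrite -e; apply: (hy_bound hT); first by rewrite e.
  exact: th_ge0.
by move=> x Ix; apply: H2.
Qed.

Lemma B_tail s t : tail (sq T (A s) t) (B s t).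
Proof. apply: (hy_tail hT); exact: A_aadd. Qed.

Lemma B_add2 s t1 t2 : B s (t1 + t2) = B s t1 + B s t2.
Proof. apply: (hy_add hT); exact: A_aadd. Qed.

Lemma B_add1 s1 s2 t : B (s1 + s2) t = B s1 t + B s2 t.
Proof.
rewrite /B (@hy_eq _ _ hT _ (fun t' => A s1 t' + A s2 t')); last by move=> x Ix; exact: A_add.
exact: hy_D (B_tail s1 t) (B_tail s2 t).
Qed.

Lemma B_approx s t : I T s -> I T t -> nc (f s t - B s t) <= 6 * th.
Proof.
move=> Is It; have h1 := A_approx Is It.
have h2 := hy_approx hT (A_aadd s) It.
have th0 := th_ge0.
have hs : `|s| / T <= 1.
  rewrite ler_pdivrMr // mul1r ler_norml; move: Is => /andP[? ?]; apply/andP; split.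
    by [].
  exact: ltW.
have h3 : `|s| / T * th <= th by rewrite -[X in _ <= X]mul1r ler_wpM2r.
have -> : f s t - B s t = (f s t - A s t) + (A s t - B s t) by ring.
apply: le_trans (ncD _ _) _.
rewrite /B in h2 *; lra.
Qed.

End TwoD.

Section Lin.
Variable R : realType.
Local Notation C := R[i].
Local Notation cR x := ((x)%:C)%C.

Section Add.
Variable D : R -> C.
Hypothesis hD : forall x y, D (x + y) = D x + D y.

Lemma D0 : D 0 = 0.
Proof. by apply/eqP; rewrite -[X in X == _](addrK (D 0)) -hD addr0 subrr. Qed.
Lemma DN x : D (- x) = - D x.
Proof. by apply/eqP; rewrite -subr_eq0 opprK -hD addNr D0. Qed.
Lemma DB x y : D (x - y) = D x - D y.
Proof. by rewrite hD DN. Qed.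
Lemma Dn (n : nat) x : D (n%:R * x) = cR (n%:R) * D x.
Proof.
elim: n => [|n IH]; first by rewrite mul0r D0 mulr0n rmorph0 mul0r.
by rewrite -natr1 mulrDl mul1r hD IH rmorphD rmorph1 /=; ring.
Qed.
Lemma Dz (m : int) x : D (m%:~R * x) = cR (m%:~R) * D x.
Proof.
case: m => n.
  by have -> : ((Posz n)%:~R : R) = n%:R by []; rewrite Dn.
have -> : ((Negz n)%:~R : R) = - (n.+1)%:R by [].
by rewrite mulNr DN Dn rmorphN /= mulNr.
Qed.
End Add.

Lemma lin_bdd (D : R -> C) (al l M : R) : 0 < l ->
  (forall x y, D (x + y) = D x + D y) ->
  (forall x, al <= x <= al + l -> nc (D x) <= M) ->
  forall x, D x = cR x * D 1.
Proof.
move=> l0 hD hb.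
have hb0 : forall x, `|x| <= l -> nc (D x) <= 2 * M.
  move=> x; rewrite ler_norml => /andP[x1 x2].
  have hb2 : forall y, 0 <= y <= l -> nc (D y) <= 2 * M.
    move=> y /andP[y1 y2].
    have -> : y = (al + y) - al by ring.
    rewrite DB //; apply: le_trans (ncD _ _) _; rewrite ncN mulr2n mulrDl mul1r.
    by apply: lerD; apply: hb; apply/andP; split; lra.
  case: (leP 0 x) => x0; first by apply: hb2; apply/andP; split.
  have -> : x = - (- x) by rewrite opprK.
  by rewrite DN // ncN; apply: hb2; apply/andP; split; lra.
pose c := cR (l^-1) * D l.
pose E x := D x - cR x * c.
have hE : forall x y, E (x + y) = E x + E y by move=> x y; rewrite /E hD rmorphD /=; ring.
have El : E l = 0.
  rewrite /E /c mulrA -rmorphM /= divff ?gt_eqF // rmorph1 mul1r subrr //.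
pose K := 2 * M + l * nc c.
have hK : forall x, `|x| <= l -> nc (E x) <= K.
  move=> x hx; rewrite /E; apply: le_trans (ncD _ _) _; rewrite ncN ncM ncR.
  apply: lerD; first exact: hb0.
  by apply: ler_wpM2r => //; exact: nc_ge0.
have K0 : 0 <= K by have := hK 0; rewrite normr0 => /(_ (ltW l0)); apply: le_trans; exact: nc_ge0.
have Ex0 : forall x, E x = 0.
  move=> x; apply: nc_eq0; apply/le_anti/andP; split; last exact: nc_ge0.
  apply: (@small _ _ _ K) => k; rewrite add0r.
  pose N : R := 2 ^+ k.
  have N0 : 0 < N by exact: pow2_gt0.
  pose y := l / N.
  have y0 : 0 < y by rewrite divr_gt0.
  have hN : N = (2 ^ k)%:R by rewrite natrX.
  have Ey : E y = 0.
    have : cR N * E y = 0.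
      by rewrite hN -Dn // -hN /y mulrC divfK ?gt_eqF.
    move/eqP; rewrite mulf_eq0 => /orP[|/eqP //].
    by rewrite (inj_eq (@complexI _)) gt_eqF.
  pose m := Num.floor (x / y).
  have := floor_itv (x / y); rewrite -/m intrD mulr1z => /andP[m1 m2].
  move: m1 m2; rewrite ler_pdivlMr // ltr_pdivrMr // mulrDl mul1r => m1 m2.
  pose r := x - m%:~R * y.
  have -> : x = m%:~R * y + r by rewrite /r; ring.
  rewrite hE Dz // Ey mulr0 add0r.
  have hr : `|N * r| <= l.
    rewrite ger0_norm; last by apply: mulr_ge0; [exact: ltW|rewrite /r; lra].
    have : r <= y by rewrite /r; lra.
    move/(ler_wpM2l (ltW N0)) => h; apply: (le_trans h); rewrite /y mulrC divfK ?gt_eqF //.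
  have := hK _ hr; rewrite hN Dn // -hN ncM ncR ger0_norm; last exact: ltW.
  by rewrite mulrC -ler_pdivlMr.
move=> x.
have e : forall z, D z = cR z * c by move=> z; have := Ex0 z; rewrite /E => /eqP; rewrite subr_eq0 => /eqP.
by rewrite !e rmorph1 mul1r.
Qed.

End Lin.

Section Bil.
Variable R : realType.
Local Notation C := R[i].
Local Notation cR x := ((x)%:C)%C.

Lemma extract (f : R -> R -> C) (S : set (R * R)) (a b : R) :
  (fun p : R * R => f p.1 p.2) @ within S (nbhs (a, b)) --> f a b ->
  exists2 e : R, 0 < e & forall s t, `|a - s| < e -> `|b - t| < e -> S (s, t) ->
    nc (f a b - f s t) < 1.
Proof.
move=> Hc.
have h : \forall p \near within S (nbhs (a, b)), `|f a b - f p.1 p.2| < 1.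
  exact: ((@cvgrPdist_lt R[i] (R[i])^o _ _ _ _ _).1 Hc 1 ltr01).
move: h; rewrite /within /= => /nbhs_ballP [e /= e0 he].
exists e => // s t hs ht hS.
have o1 : (1 : C) = cR 1 by rewrite rmorph1.
have := he (s, t); rewrite o1 ltcR; apply => //.
Qed.

Variable T : R.
Hypothesis hT : 0 < T.
Variable th : R.
Variable f : R -> R -> C.
Hypothesis H1 : forall t, I T t -> aadd T th (fun s => f s t).
Hypothesis H2 : forall s, I T s -> aadd T th (f s).

Local Notation Bf := (B T f).

Lemma B_bilin (a b : R) : I T a -> I T b ->
  (fun p : R * R => f p.1 p.2)
     @ within [set p : R * R | -T <= p.1 < T /\ -T <= p.2 < T] (nbhs (a, b))
     --> f a b ->
  forall s t, Bf s t = cR (s * t) * Bf 1 1.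
Proof.
move=> Ia Ib Hc.
have [e e0 he] := extract Hc.
have hT' := hT.
have th0 : 0 <= th := th_ge0 hT H2.
move: Ia Ib => /andP[a1 a2] /andP[b1 b2].
pose la := Num.min (e / 2) ((T - a) / 2).
pose lb := Num.min (e / 2) ((T - b) / 2).
have la0 : 0 < la by rewrite lt_min; apply/andP; split; lra.
have lb0 : 0 < lb by rewrite lt_min; apply/andP; split; lra.
have la1 : la <= e / 2 by rewrite ge_min lexx.
have la2 : la <= (T - a) / 2 by rewrite ge_min lexx orbT.
have lb1 : lb <= e / 2 by rewrite ge_min lexx.
have lb2 : lb <= (T - b) / 2 by rewrite ge_min lexx orbT.
pose M := nc (f a b) + 1 + 6 * th.
have hM : forall s t, a <= s <= a + la -> b <= t <= b + lb -> nc (Bf s t) <= M.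
  move=> s t /andP[s1 s2] /andP[t1 t2].
  have Is : I T s by apply/andP; split; lra.
  have It : I T t by apply/andP; split; lra.
  have h1 : nc (f a b - f s t) < 1.
    apply: he; first by rewrite ltr_norml; apply/andP; split; lra.
      by rewrite ltr_norml; apply/andP; split; lra.
    by move: Is It => /andP[? ?] /andP[? ?]; split; apply/andP; split.
  have h2 := B_approx hT H1 H2 Is It.
  have -> : Bf s t = f a b - (f a b - f s t) - (f s t - Bf s t) by ring.
  apply: le_trans (ncD _ _) _; rewrite ncN.
  apply: le_trans (lerD (ncD _ _) (lexx _)) _; rewrite ncN; rewrite /M; lra.
have ad1 := B_add1 hT H1 H2.
have ad2 := B_add2 hT H1 H2.
have hi : forall t, b <= t <= b + lb -> forall s, Bf s t = cR s * Bf 1 t.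
  move=> t ht; apply: (@lin_bdd _ (fun s => Bf s t) a la M la0) => //.
  by move=> s hs; apply: hM.
have hii : forall t, Bf 1 t = cR t * Bf 1 1.
  apply: (@lin_bdd _ (Bf 1) b lb (2 * M / la) lb0) => // t ht.
  have e1 : Bf la t = Bf (a + la) t - Bf a t by rewrite ad1; ring.
  have h3 : nc (Bf la t) <= 2 * M.
    rewrite e1; apply: le_trans (ncD _ _) _; rewrite ncN.
    have := hM (a + la) t; have := hM a t.
    have r1 : a <= a <= a + la by apply/andP; split; lra.
    have r2 : a <= a + la <= a + la by apply/andP; split; lra.
    move=> /(_ r1 ht) h4 /(_ r2 ht) h5; lra.
  move: h3; rewrite (hi t ht) ncM ncR ger0_norm; last exact: ltW.
  by rewrite -ler_pdivlMl // mulrC.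
have hiii : forall s t, Bf s t = cR t * Bf s 1.
  move=> s.
  apply: (@lin_bdd _ (Bf s) b lb (`|s| * (`|b| + lb) * nc (Bf 1 1)) lb0) => // t ht.
  rewrite (hi t ht) hii !ncM !ncR mulrA.
  apply: ler_wpM2r; first exact: nc_ge0.
  apply: ler_wpM2l => //.
  move: ht => /andP[t1 t2]; rewrite ler_norml.
  have := ler_norm b; have : - b <= `|b| by rewrite -normrN ler_norm.
  move=> n1 n2; apply/andP; split; lra.
have hiv : forall s, Bf s 1 = cR s * Bf 1 1.
  move=> s.
  pose t0 := if b == 0 then b + lb else b.
  have t0r : b <= t0 <= b + lb by rewrite /t0; case: eqP => _; apply/andP; split; lra.
  have t00 : t0 != 0.
    by rewrite /t0; case: (eqVneq b 0) => [->|bn]; [rewrite add0r gt_eqF | ].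
  have := hiii s t0; rewrite (hi t0 t0r) hii => /eqP.
  rewrite -subr_eq0.
  have -> : cR s * (cR t0 * Bf 1 1) - cR t0 * Bf s 1 = cR t0 * (cR s * Bf 1 1 - Bf s 1) by ring.
  rewrite mulf_eq0 => /orP[|/eqP]; first by rewrite (inj_eq (@complexI _)) (negPf t00).
  by move/eqP; rewrite subr_eq0 => /eqP.
move=> s t; rewrite hiii hiv rmorphM /=; ring.
Qed.

End Bil.

Section Cont.
Variable R : realType.
Local Notation C := R[i].
Local Notation cR x := ((x)%:C)%C.

Lemma cont_cR : continuous (fun x : R => cR x).
Proof.
move=> x; apply/(@cvgrPdist_lt R[i] (R[i])^o) => e e0.
have eE : e = cR (complex.Re e).
  by move: e0; rewrite ltcE => /andP[/eqP h _]; case: e h => a b /= ->.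
have er : 0 < complex.Re e by move: e0; rewrite ltcE => /andP[_ ->].
have h : \forall t \near x, `|x - t| < complex.Re e.
  exact: ((@cvgrPdist_lt R R^o _ _ _ _ _).1 (@cvg_id _ (nbhs x)) _ er).
apply: filterS h => t ht.
have ltC : forall (z : C) c, (`|z| < cR c) = (nc z < c) by move=> z c; exact: ltcR.
by rewrite eE -rmorphB /= ltC ncR.
Qed.

Variable X : topologicalType.

Lemma cont_sum_seq (I : Type) (r : seq I) (Fs : I -> X -> C) :
  (forall i, continuous (Fs i)) -> continuous (fun p => \sum_(i <- r) Fs i p).
Proof.
move=> h; elim: r => [|a r IH].
  have -> : (fun p => \sum_(i <- [::]) Fs i p) = fun=> 0.
    by apply: funext => p; rewrite big_nil.
  by move=> p; exact: cst_continuous.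
have -> : (fun p => \sum_(i <- a :: r) Fs i p) = (Fs a + fun p => \sum_(i <- r) Fs i p).
  by apply: funext => p; rewrite big_cons.
move=> p; apply: (@continuousD R[i] (R[i])^o X); [exact: h | exact: IH].
Qed.

Lemma cont_sum (I : finType) (Fs : I -> X -> C) :
  (forall i, continuous (Fs i)) -> continuous (fun p => \sum_i Fs i p).
Proof. exact: cont_sum_seq. Qed.

Lemma cont_mul (f1 f2 : X -> C) : continuous f1 -> continuous f2 ->
  continuous (fun p => f1 p * f2 p).
Proof. move=> h1 h2 p. have := @continuousM R[i] X f1 f2 p (h1 p) (h2 p). exact. Qed.

Lemma cont_add (f1 f2 : X -> C) : continuous f1 -> continuous f2 ->
  continuous (fun p => f1 p + f2 p).
Proof.
move=> h1 h2; have -> : (fun p => f1 p + f2 p) = (f1 + f2) by apply: funext.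
move=> p; apply: (@continuousD R[i] (R[i])^o X); [exact: h1 | exact: h2].
Qed.

End Cont.

Section Main.
Variables (R : realType) (d : nat) (T theta : R) (g : 'rV[R]_d -> 'rV[R]_d -> R[i]).
Local Notation C := R[i].
Local Notation cR x := ((x)%:C)%C.
Hypotheses (hT : 0 < T) (hth : 0 <= theta) (hsym : symmetric_on (box d T) g)
  (hg : biadditive_approx (box d T) theta g).

Definition F (x : 'rV[R]_d) (i : 'I_d) : 'rV[R]_d := x ord0 i *: ebasis i.
Definition f i k s t := g (s *: ebasis i) (t *: ebasis k).
Definition Bk i k := B T (f i k).

Lemma boxI x : box d T x <-> forall i, I T (x ord0 i).
Proof. by []. Qed.

Lemma box_e s i : I T s -> box d T (s *: ebasis i).
Proof.
move=> Is j; rewrite /ebasis !mxE eqxx /=.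
case: eqP => _; first by rewrite mulr1.
by rewrite mulr0; have := I0 hT.
Qed.

Lemma H1 i k : forall t, I T t -> aadd T theta (fun s => f i k s t).
Proof.
move=> t It a b Ia Ib Iab; rewrite /f scalerDl -leC.
apply: hg.1; try exact: box_e.
by rewrite -scalerDl; exact: box_e.
Qed.

Lemma H2 i k : forall s, I T s -> aadd T theta (f i k s).
Proof.
move=> s Is a b Ia Ib Iab; rewrite /f scalerDl -leC.
apply: hg.2; try exact: box_e.
by rewrite -scalerDl; exact: box_e.
Qed.

Lemma sumF_coord x (r : seq 'I_d) k : uniq r ->
  (\sum_(i <- r) F x i) ord0 k = if k \in r then x ord0 k else 0.
Proof.
elim: r => [|a r IH]; first by rewrite big_nil mxE.
rewrite /= => /andP[ar ur]; rewrite big_cons mxE IH // /F /ebasis !mxE eqxx /= in_cons.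
case: (eqVneq k a) => [->|ka] /=; first by rewrite (negPf ar) mulr1 addr0.
by rewrite mulr0 add0r.
Qed.

Lemma box_sumF x (r : seq 'I_d) : box d T x -> uniq r -> box d T (\sum_(i <- r) F x i).
Proof.
move=> bx ur j; rewrite sumF_coord //; case: ifP => _; first exact: bx.
exact: (I0 hT).
Qed.

Lemma box_F x i : box d T x -> box d T (F x i).
Proof. move=> bx; exact/box_e/bx. Qed.

Lemma decomp (phi : 'rV[R]_d -> C) x (r : seq 'I_d) :
  (forall x1 x2, box d T x1 -> box d T x2 -> box d T (x1 + x2) ->
     nc (phi (x1 + x2) - phi x1 - phi x2) <= theta) ->
  box d T x -> uniq r -> r != [::] ->
  nc (phi (\sum_(i <- r) F x i) - \sum_(i <- r) phi (F x i)) <= (size r).-1%:R * theta.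
Proof.
move=> hphi bx; elim: r => [//|a r IH] /= /andP[ar ur] _.
case: r IH ar ur => [|b r] IH ar ur.
  by rewrite !big_cons !big_nil !addr0 subrr nc0 mul0r.
rewrite big_cons [X in _ - X]big_cons.
set S := \sum_(i <- b :: r) F x i; set P := \sum_(i <- b :: r) phi (F x i).
have -> : phi (F x a + S) - (phi (F x a) + P) =
   (phi (F x a + S) - phi (F x a) - phi S) + (phi S - P) by ring.
apply: le_trans (ncD _ _) _.
have h1 : box d T (F x a + S).
  have u : uniq (a :: b :: r) by rewrite cons_uniq ar ur.
  by have := box_sumF bx u; rewrite big_cons.
have := hphi _ _ (box_F a bx) (box_sumF bx ur) h1 => e1.
have := IH ur isT => e2.
rewrite /= -natr1 mulrDl mul1r addrC; exact: lerD.
Qed.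


Definition G0 (x y : 'rV[R]_d) : C := \sum_i \sum_k Bk i k (x ord0 i) (y ord0 k).

Lemma sum_enum (G : 'I_d -> C) : \sum_(i <- enum 'I_d) G i = \sum_i G i.
Proof. by rewrite big_enum; apply: eq_bigl => i; rewrite inE. Qed.
Lemma sum_enumV (G : 'I_d -> 'rV[R]_d) : \sum_(i <- enum 'I_d) G i = \sum_i G i.
Proof. by rewrite big_enum; apply: eq_bigl => i; rewrite inE. Qed.

Lemma sumF_full x : \sum_i F x i = x.
Proof. by rewrite [RHS]row_sum_delta. Qed.

Lemma decomp_full (phi : 'rV[R]_d -> C) x : (0 < d)%N ->
  (forall x1 x2, box d T x1 -> box d T x2 -> box d T (x1 + x2) ->
     nc (phi (x1 + x2) - phi x1 - phi x2) <= theta) ->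
  box d T x -> nc (phi x - \sum_i phi (F x i)) <= d.-1%:R * theta.
Proof.
move=> hd hphi bx.
have r0 : enum 'I_d != [::] by rewrite -size_eq0 size_enum_ord -lt0n.
have := decomp hphi bx (enum_uniq _) r0.
by rewrite sum_enumV sum_enum sumF_full size_enum_ord.
Qed.

Lemma nc_sum_le (I : finType) (z : I -> C) c : (forall i, nc (z i) <= c) ->
  nc (\sum_i z i) <= #|I|%:R * c.
Proof.
move=> h; apply: le_trans (nc_sum _) _.
apply: le_trans (ler_sum _ (fun i _ => h i)) _.
rewrite sumr_const mulr_natl; exact: lexx.
Qed.

Lemma main_bound x y : (0 < d)%N -> box d T x -> box d T y ->
  nc (g x y - G0 x y) <= (((7 * d ^ 2)%N)%:R - 1) * theta.
Proof.
move=> hd bx byy.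
have D1 : nc (g x y - \sum_i g (F x i) y) <= d.-1%:R * theta.
  apply: (decomp_full (phi := g^~ y)) => // x1 x2 b1 b2 b12; rewrite -leC.
  exact: hg.1.
have D2 : forall i, nc (g (F x i) y - \sum_k g (F x i) (F y k)) <= d.-1%:R * theta.
  move=> i; apply: (decomp_full (phi := g (F x i))) => // x1 x2 b1 b2 b12; rewrite -leC.
  by apply: hg.2 => //; exact: box_F.
have D3 : forall i k, nc (g (F x i) (F y k) - Bk i k (x ord0 i) (y ord0 k)) <= 6 * theta.
  move=> i k; apply: (B_approx hT (H1 i k) (H2 i k)); [exact: bx | exact: byy].
have -> : g x y - G0 x y = (g x y - \sum_i g (F x i) y) +
   (\sum_i (g (F x i) y - \sum_k g (F x i) (F y k))) +
   (\sum_i \sum_k (g (F x i) (F y k) - Bk i k (x ord0 i) (y ord0 k))).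
  rewrite /G0 sumrB.
  have -> : \sum_i \sum_k (g (F x i) (F y k) - Bk i k (x ord0 i) (y ord0 k)) =
     \sum_i \sum_k g (F x i) (F y k) - \sum_i \sum_k Bk i k (x ord0 i) (y ord0 k).
    by rewrite -sumrB; apply: eq_bigr => i _; rewrite sumrB.
  ring.
apply: le_trans (ncD _ _) _; apply: le_trans (lerD (ncD _ _) (lexx _)) _.
have E2 := nc_sum_le D2.
have E3 : nc (\sum_i \sum_k (g (F x i) (F y k) - Bk i k (x ord0 i) (y ord0 k)))
   <= #|'I_d|%:R * (#|'I_d|%:R * (6 * theta)).
  by apply: nc_sum_le => i; apply: nc_sum_le => k; exact: D3.
rewrite card_ord in E2 E3.
have -> : (((7 * d ^ 2)%N)%:R - 1) * theta =
   d.-1%:R * theta + d%:R * (d.-1%:R * theta) + d%:R * (d%:R * (6 * theta)).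
  case: d hd {bx byy D1 D2 D3 E2 E3 x y} => // n _ /=.
  rewrite natrM natrX -natr1; ring.
by apply: lerD; [apply: lerD|].
Qed.

Definition G (x y : 'rV[R]_d) : C := (G0 x y + G0 y x) / 2.

Lemma G0_add1 x1 x2 y : G0 (x1 + x2) y = G0 x1 y + G0 x2 y.
Proof.
rewrite /G0 -big_split; apply: eq_bigr => i _; rewrite -big_split.
apply: eq_bigr => k _; rewrite mxE; exact: (B_add1 hT (H1 i k) (H2 i k)).
Qed.

Lemma G0_add2 x y1 y2 : G0 x (y1 + y2) = G0 x y1 + G0 x y2.
Proof.
rewrite /G0 -big_split; apply: eq_bigr => i _; rewrite -big_split.
apply: eq_bigr => k _; rewrite mxE; exact: (B_add2 hT (H1 i k) (H2 i k)).
Qed.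

Lemma G_add1 x1 x2 y : G (x1 + x2) y = G x1 y + G x2 y.
Proof. rewrite /G G0_add1 G0_add2; ring. Qed.
Lemma G_add2 x y1 y2 : G x (y1 + y2) = G x y1 + G x y2.
Proof. rewrite /G G0_add1 G0_add2; ring. Qed.
Lemma G_sym x y : G x y = G y x.
Proof. by rewrite /G addrC. Qed.

Lemma nc_half : nc ((2 : C)^-1) = 2^-1.
Proof.
have nc2 : nc (2 : C) = 2 by rewrite -cR2 ncR ger0_norm.
by rewrite /nc Normc.normcV -/(nc 2) nc2.
Qed.

Lemma G_bound x y : (0 < d)%N -> box d T x -> box d T y ->
  nc (g x y - G x y) <= (((7 * d ^ 2)%N)%:R - 1) * theta.
Proof.
move=> hd bx byy.
have e := hsym bx byy.
have -> : g x y - G x y = ((g x y - G0 x y) + (g y x - G0 y x)) * 2^-1.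
  by rewrite /G -e; field.
rewrite ncM nc_half.
have := ncD (g x y - G0 x y) (g y x - G0 y x).
have := main_bound hd bx byy; have := main_bound hd byy bx; lra.
Qed.

Definition beta i k := Bk i k 1 1.
Definition S0 (x y : 'rV[R]_d) : C :=
  \sum_i \sum_k cR (x ord0 i) * cR (y ord0 k) * beta i k.

Lemma cont_coord1 (i : 'I_d) : continuous (fun p : 'rV[R]_d * 'rV[R]_d => cR (p.1 ord0 i)).
Proof.
move=> p; apply: continuous_comp; last exact: cont_cR.
apply: (@continuous_comp _ _ _ fst (fun M : 'rV[R]_d => M ord0 i)).
  exact: cvg_fst.
exact: coord_continuous.
Qed.

Lemma cont_coord2 (i : 'I_d) : continuous (fun p : 'rV[R]_d * 'rV[R]_d => cR (p.2 ord0 i)).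
Proof.
move=> p; apply: continuous_comp; last exact: cont_cR.
apply: (@continuous_comp _ _ _ snd (fun M : 'rV[R]_d => M ord0 i)).
  exact: cvg_snd.
exact: coord_continuous.
Qed.

Lemma part4 :
  (forall i k : 'I_d, exists a b : R,
            (-T <= a < T) /\ (-T <= b < T) /\
            (fun p : R * R => g (p.1 *: ebasis i) (p.2 *: ebasis k))
              @ within [set p : R * R | -T <= p.1 < T /\ -T <= p.2 < T] (nbhs (a, b))
              --> g (a *: ebasis i) (b *: ebasis k)) ->
  {within [set p : 'rV[R]_d * 'rV[R]_d | box d T p.1 /\ box d T p.2],
            continuous (fun p => G p.1 p.2)} /\
  bilinear_on (box d T) G.
Proof.
move=> Hc.
have Hf : forall i k s t, Bk i k s t = cR (s * t) * beta i k.
  move=> i k; have [a [b [Ia [Ib Hc']]]] := Hc i k.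
  exact: (B_bilin hT (H1 i k) (H2 i k) Ia Ib Hc').
have G0E : forall x y, G0 x y = S0 x y.
  move=> x y; rewrite /G0 /S0; apply: eq_bigr => i _; apply: eq_bigr => k _.
  by rewrite Hf rmorphM.
split.
  apply: continuous_subspaceT.
  have -> : (fun p : 'rV[R]_d * 'rV[R]_d => G p.1 p.2) =
     (fun p => (S0 p.1 p.2 + S0 p.2 p.1) * (2 : C)^-1).
    by apply: funext => p; rewrite /G !G0E.
  apply: cont_mul; last by move=> p; exact: cst_continuous.
  apply: cont_add.
    by apply: cont_sum => i; apply: cont_sum => k; apply: cont_mul;
      [apply: cont_mul; [exact: cont_coord1|exact: cont_coord2]|move=> q; exact: cst_continuous].
  by apply: cont_sum => i; apply: cont_sum => k; apply: cont_mul;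
    [apply: cont_mul; [exact: cont_coord2|exact: cont_coord1]|move=> q; exact: cst_continuous].
have sc1 : forall c x y, S0 (c *: x) y = cR c * S0 x y.
  move=> c x y; rewrite /S0 mulr_sumr; apply: eq_bigr => i _; rewrite mulr_sumr.
  by apply: eq_bigr => k _; rewrite mxE rmorphM /=; ring.
have sc2 : forall c x y, S0 x (c *: y) = cR c * S0 x y.
  move=> c x y; rewrite /S0 mulr_sumr; apply: eq_bigr => i _; rewrite mulr_sumr.
  by apply: eq_bigr => k _; rewrite mxE rmorphM /=; ring.
split; [split|split].
- move=> x1 x2 y _ _ _ _; rewrite G_add1.
  set u := G x1 y; set v := G x2 y.
  have -> : u + v - u - v = 0 by ring.
  by rewrite normr0 rmorph0.
- move=> x y1 y2 _ _ _ _; rewrite G_add2.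
  set u := G x y1; set v := G x y2.
  have -> : u + v - u - v = 0 by ring.
  by rewrite normr0 rmorph0.
- by move=> c x y _ _ _; rewrite /G !G0E sc1 sc2; ring.
- by move=> c x y _ _ _; rewrite /G !G0E sc1 sc2; ring.
Qed.

End Main.

Unset Implicit Arguments.
Set Strict Implicit.

Theorem lemma15 (R : realType) (d : nat) (T theta : R)
  (g : 'rV[R]_d -> 'rV[R]_d -> R[i]) :
  (0 < d)%N -> 0 < T -> 0 <= theta ->
  symmetric_on (box d T) g ->
  biadditive_approx (box d T) theta g ->
  exists G : 'rV[R]_d -> 'rV[R]_d -> R[i],
    [/\ symmetric_on (box d T) G,
        biadditive_on (box d T) G,
        (forall x y, box d T x -> box d T y ->
           `|g x y - G x y| <= (((((7 * d ^ 2)%N)%:R - 1) * theta)%:C)%C) &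
        ((forall i k : 'I_d, exists a b : R,
            (-T <= a < T) /\ (-T <= b < T) /\
            (fun p : R * R => g (p.1 *: ebasis i) (p.2 *: ebasis k))
              @ within [set p : R * R | -T <= p.1 < T /\ -T <= p.2 < T] (nbhs (a, b))
              --> g (a *: ebasis i) (b *: ebasis k)) ->
         {within [set p : 'rV[R]_d * 'rV[R]_d | box d T p.1 /\ box d T p.2],
            continuous (fun p => G p.1 p.2)} /\
         bilinear_on (box d T) G)].
Proof.
move=> hd hT hth hsym hg.
exists (G T g); split.
- by move=> x y _ _; exact: G_sym.
- split.
    move=> x1 x2 y _ _ _ _; rewrite (G_add1 hT hg).
    set a := G T g x1 y; set b := G T g x2 y.
    have -> : a + b - a - b = 0 by ring.
    by rewrite normr0 rmorph0.
  move=> x y1 y2 _ _ _ _; rewrite (G_add2 hT hg).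
  set a := G T g x y1; set b := G T g x y2.
  have -> : a + b - a - b = 0 by ring.
  by rewrite normr0 rmorph0.
- by move=> x y bx byy; rewrite leC; exact: (G_bound hT hsym hg).
- exact: (part4 hT hg).
Qed.
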